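(* Let $X$ be a set. For every continuous map $f\colon\mathbb{V}([0,1]^X)\to[0,1]$ there exist an at most countable set $Y$, a continuous map $s\colon[0,1]^Y\to[0,1]$ and a family $(h_y\colon[0,1]^X\to[0,1])_{y\in Y}$ of continuous maps such that $f=s\circ\langle\Box\circ\mathbb{V}h_y\rangle_{y\in Y}$.
   Context: $[0,1]^X$ has the product topology. For a compact Hausdorff space $Z$, $\mathbb{V}Z$ is the set of all closed subsets of $Z$ (including $\varnothing$) with the Vietoris topology, generated by $\{K\mid K\subseteq U\}$ and $\{K\mid K\cap U\neq\varnothing\}$ for $U$ open in $Z$; for continuous $h\colon Z\to W$, $\mathbb{V}h(K)=h[K]$. $\Box\colon\mathbb{V}([0,1])\to[0,1]$ is $K\mapsto\inf K$ (with $\inf\varnothing=1$). For a family of maps $(g_y\colon A\to B_y)_{y\in Y}$, $\langle g_y\rangle_{y\in Y}\colon A\to\prod_y B_y$ is the induced map. *)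

(* Defs.v *)
From HB Require Import structures.
From mathcomp Require Import all_boot all_order all_algebra.
From mathcomp Require Import all_classical all_reals all_analysis.
Set Implicit Arguments. Unset Strict Implicit. Unset Printing Implicit Defensive.
Import Order.TTheory GRing.Theory Num.Theory.
Local Open Scope classical_set_scope.
Local Open Scope ring_scope.
Import numFieldNormedType.Exports.

Definition unit_itv (R : realType) : set R := `[0, 1]%classic.
Arguments unit_itv : clear implicits.
Definition I01 (R : realType) : topologicalType := set_type (unit_itv R).

Definition cube (R : realType) (X : Type) : topologicalType := {ptws X -> I01 R}.

(** The hyperspace V Z: the closed subsets of Z with the Vietoris topology,
    generated by the subbase {K | K ⊆ U} and {K | K ∩ U ≠ ∅}, U open. *)
Definition vietoris (Z : topologicalType) : Type := set_type (@closed Z).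

HB.instance Definition _ (Z : topologicalType) :=
  Choice.on (vietoris Z).

Definition vietoris_subbase (Z : topologicalType) (i : bool * set Z)
  : set (vietoris Z) :=
  if i.1 then [set K : vietoris Z | sval K `<=` i.2]
  else [set K : vietoris Z | sval K `&` i.2 !=set0].

HB.instance Definition _ (Z : topologicalType) :=
  isSubBaseTopological.Build (vietoris Z)
    [set i : bool * set Z | open i.2] (@vietoris_subbase Z).

Definition Vmap (Z W : Type) (h : Z -> W) (K : set Z) : set W := h @` K.

(** Box : V([0,1]) -> [0,1], K |-> inf K, with inf of the empty set = 1. *)
Definition box_val (R : realType) (S : set (I01 R)) : R :=
  if pselect (S !=set0) then inf (sval @` S) else 1.

Lemma I01_bounds (R : realType) (y : I01 R) : 0 <= sval y <= 1.
Proof. by have := svalP y; rewrite /unit_itv inE /= in_itv. Qed.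

Lemma box_val_in01 (R : realType) (S : set (I01 R)) :
  box_val S \in unit_itv R.
Proof.
rewrite /box_val /unit_itv; apply/mem_set; destruct (pselect (S !=set0)) as [[x Sx]|nS]; last first.
  by rewrite /= in_itv /= lexx ler01.
have /andP[x0 x1] := I01_bounds x.
rewrite /= in_itv /=; apply/andP; split.
  apply: lb_le_inf; first by exists (sval x), x.
  move=> _ [y _ <-]; by case/andP: (I01_bounds y).
have hl : has_lbound (sval @` S).
  exists 0 => _ [y _ <-]; by case/andP: (I01_bounds y).
apply: le_trans x1; exact: (ge_inf hl (ex_intro2 _ _ x Sx erefl)).
Qed.

Definition box (R : realType) (S : set (I01 R)) : I01 R :=
  exist _ (box_val S) (box_val_in01 S).

(* Main.v *)
Require Import Defs.
From HB Require Import structures.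
From mathcomp Require Import all_boot all_order all_algebra.
From mathcomp Require Import all_classical all_reals all_analysis.
From mathcomp Require Import lra.
Import Order.TTheory GRing.Theory Num.Theory.
Import numFieldNormedType.Exports.
Local Open Scope classical_set_scope.
Local Open Scope ring_scope.



Section Vgen.
Variable Z : topologicalType.
Lemma vopen (i : bool * set Z) : open i.2 -> open (vietoris_subbase i).
Proof.
move=> oi.
rewrite /open /=.
exists [set vietoris_subbase i].
  move=> _ ->; exact: finI_from1.
by rewrite bigcup_set1.
Qed.

Lemma vcvg (F : set_system (vietoris Z)) (K : vietoris Z) : Filter F ->
  (forall i, open i.2 -> vietoris_subbase i K -> F (vietoris_subbase i)) -> F --> K.
Proof.
move=> FF HF A; rewrite nbhsE => -[B [oB BK BA]].
apply: filterS BA _.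
move: oB; rewrite /open /= => -[D' sD' eB].
move: BK; rewrite -eB => -[C DC CK].
have FC : F C.
  have [D'' sD'' eC] := sD' C DC.
  rewrite -eC; apply: filter_bigI => i Di.
  have := sD'' i Di; rewrite inE => oi.
  by apply: HF => //; move: CK; rewrite -eC; apply.
apply: (filterS _ FC) => x Cx.
by exists C.
Qed.

Lemma vcompact : compact [set: Z] -> compact [set: vietoris Z].
Proof.
move=> cZ; rewrite compact_ultra => F FU _.
pose M (U : set Z) := vietoris_subbase (false, U).
pose Ks := [set x : Z | forall U, open U -> U x -> F (M U)].
have cKs : closed Ks.
  move=> x clx U oU Ux.
  have [y [Ky Uy]] := clx U (open_nbhs_nbhs (conj oU Ux)).
  exact: Ky.
pose K0 : vietoris Z := exist _ Ks (mem_set cKs).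
exists K0; split => //.
apply: vcvg => -[[] U] /= oU.
- move=> KU.
  have [//|nF] := in_ultra_setVsetC [set K : vietoris Z | sval K `<=` U] FU.
  exfalso.
  pose C := ~` U.
  pose G := [set B : set Z | F [set K : vietoris Z | sval K `&` C `<=` B]].
  have PF : ProperFilter F := @ultra_proper _ F FU.
  have FF : Filter F by exact: filter_filter.
  have FG : ProperFilter G.
    apply: Build_ProperFilter.
      move=> G0; apply: (@filter_not_empty _ F PF).
      apply: (filterS _ (@filterI _ F FF _ _ G0 nF)).
      move=> K [/= K0e nKU]; apply: nKU => y Ky.
      apply: contrapT => nUy; exact: (K0e y (conj Ky nUy)).
    constructor.
    - by apply: (filterS _ (@filterT _ F FF)).
    - move=> A B GA GB; apply: (filterS _ (@filterI _ F FF _ _ GA GB)) => K [h1 h2] y Ky.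
      by split; [exact: h1|exact: h2].
    - by move=> A B AB GA; apply: (@filterS _ F FF _ _ _ GA) => K h y Ky; apply: AB; exact: h.
  have GC : G C by apply: (filterS _ (@filterT _ F FF)) => K _ y [].
  have cC : compact C.
    apply: (subclosed_compact _ cZ) => //.
    by rewrite closedC.
  have [x [Cx clx]] := cC G FG GC.
  have nKx : ~ Ks x by move=> /KU.
  move: nKx => /existsNP [U' /not_implyP [oU' /not_implyP [U'x nFU']]].
  have [//|FnU'] := in_ultra_setVsetC (M U') FU.
  have GU' : G (~` U').
    apply: (@filterS _ F FF _ _ _ FnU') => K /= nm y [Ky _] U'y; apply: nm; by exists y.
  have [y [ny Uy]] := clx _ _ GU' (open_nbhs_nbhs (conj oU' U'x)).
  exact: ny.
- by move=> [x [Kx Ux]]; exact: Kx.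
Qed.
End Vgen.

Section Box.
Variable R : realType.
Variable Z : topologicalType.
Lemma bv_le (S : set (I01 R)) y : S y -> box_val S <= sval y.
Proof.
move=> Sy; rewrite /box_val; destruct (pselect (S !=set0)) as [Sne|nS]; last by exfalso; apply: nS; exists y.
apply: ge_inf; last by exists y.
by exists 0 => _ [z _ <-]; case/andP: (I01_bounds z).
Qed.

Lemma bv_ge (S : set (I01 R)) m : m <= 1 -> (forall y, S y -> m <= sval y) -> m <= box_val S.
Proof.
move=> m1 H; rewrite /box_val; destruct (pselect (S !=set0)) as [[y Sy]|] => //.
apply: lb_le_inf; first by exists (sval y), y.
by move=> _ [z Sz <-]; exact: H.
Qed.

Lemma bv_le1 (S : set (I01 R)) : box_val S <= 1.
Proof. by have := box_val_in01 S; rewrite /unit_itv inE /= in_itv => /andP[]. Qed.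

Lemma bv_ge0 (S : set (I01 R)) : 0 <= box_val S.
Proof. by have := box_val_in01 S; rewrite /unit_itv inE /= in_itv => /andP[]. Qed.

Lemma bv_approx (S : set (I01 R)) e : S !=set0 -> 0 < e ->
  exists y, S y /\ sval y < box_val S + e.
Proof.
move=> [y0 Sy0] e0; rewrite /box_val; destruct (pselect (S !=set0)) as [Sne|nS]; last by exfalso; apply: nS; exists y0.
have hl : has_inf (sval @` S).
  split; first by exists (sval y0), y0.
  by exists 0 => _ [z _ <-]; case/andP: (I01_bounds z).
have [_ [y Sy <-] lt] := inf_adherent e0 hl.
by exists y.
Qed.

Lemma bv_empty (S : set (I01 R)) : ~ (S !=set0) -> box_val S = 1.
Proof. by move=> nS; rewrite /box_val; destruct (pselect (S !=set0)). Qed.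
Lemma cont_to01' (T : topologicalType) (g : T -> I01 R) :
  continuous (fun t => sval (g t)) -> continuous g.
Proof.
move=> cg; exact: (@continuous_comp_initial _ _ _ (@set_val R (unit_itv R))).
Qed.

Lemma open_hlt (h : Z -> I01 R) (a : R) : continuous h -> open [set x | sval (h x) < a].
Proof.
move=> ch.
have cs : continuous (fun x => sval (h x)).
  move=> x; apply: continuous_comp; [exact: ch| exact: initial_continuous].
move/continuousP : cs => cs; exact: (cs _ (@open_lt _ a)).
Qed.

Lemma open_hgt (h : Z -> I01 R) (a : R) : continuous h -> open [set x | a < sval (h x)].
Proof.
move=> ch.
have cs : continuous (fun x => sval (h x)).
  move=> x; apply: continuous_comp; [exact: ch| exact: initial_continuous].
move/continuousP : cs => cs; exact: (cs _ (@open_gt _ a)).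
Qed.

Lemma box_cont (h : Z -> I01 R) : continuous h ->
  continuous (fun K : vietoris Z => box (Vmap h (sval K))).
Proof.
move=> ch; apply: cont_to01' => K0.
have NF : Filter (nbhs K0) by exact: nbhs_filter.
move: NF; rewrite /nbhs /= => NF.
apply/cvgrPdist_lt => e e0.
set c := box_val (Vmap h (sval K0)).
have e20 : 0 < e / 2 by rewrite divr_gt0.
pose U1 := [set x | c - e / 2 < sval (h x)].
have n1 : nbhs K0 (vietoris_subbase (true, U1)).
  apply: open_nbhs_nbhs; split; first by apply: vopen; exact: open_hgt.
  move=> x K0x /=; apply: (@lt_le_trans _ _ c).
    by rewrite ltrBlDr ltrDl.
  by apply: bv_le; exists x.
have lo : forall K : vietoris Z, vietoris_subbase (true, U1) K ->
    c - e / 2 <= box_val (Vmap h (sval K)).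
  move=> K /= KU; apply: bv_ge.
    by rewrite lerBlDr; apply: ler_wpDr; [exact: ltW|exact: bv_le1].
  by move=> _ [x Kx <-]; apply: ltW; exact: KU.
have [[x0 K0x0]|nK0] := pselect (sval K0 !=set0).
  have hne : Vmap h (sval K0) !=set0 by exists (h x0), x0.
  have [y [[x K0x <-] hx]] := bv_approx _ _ hne e20.
  pose U2 := [set x | sval (h x) < c + e / 2].
  have n2 : nbhs K0 (vietoris_subbase (false, U2)).
    apply: open_nbhs_nbhs; split; first by apply: vopen; exact: open_hlt.
    by exists x.
  apply: (filterS _ (filterI n1 n2)) => K [K1 [z [Kz Uz]]].
  have := lo K K1; have : box_val (Vmap h (sval K)) <= sval (h z) by apply: bv_le; exists z.
  move: Uz; rewrite /U2 /= => Uz hb hl.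
  rewrite ltr_norml; apply/andP; split; lra.
have c1 : c = 1.
  apply: bv_empty => -[_ [x Kx _]]; apply: nK0; by exists x.
apply: (filterS _ n1) => K K1.
have hl := lo K K1; have hu := bv_le1 (Vmap h (sval K)).
rewrite ltr_norml; apply/andP; split; lra.
Qed.
End Box.


Section Cube.
Variable R : realType.

Lemma cont_sval : continuous (fun x : I01 R => sval x).
Proof. exact: initial_continuous. Qed.

Lemma cont_to01 (T : topologicalType) (g : T -> I01 R) :
  continuous (fun t => sval (g t)) -> continuous g.
Proof.
move=> cg; exact: (@continuous_comp_initial _ _ _ (@set_val R (unit_itv R))).
Qed.

Lemma cont_proj (I : Type) (i : I) : continuous (fun z : cube R I => z i).
Proof. exact: (@proj_continuous {classic I} (fun _ => I01 R) i). Qed.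

Lemma cont_prod (I : Type) (T : topologicalType) (g : T -> cube R I) :
  (forall i, continuous (fun t => g t i)) -> continuous g.
Proof.
move=> cg t.
apply/cvg_sup => i.
move=> U [? /= [[W oW <-]]] /= Wsfz /filterS; apply; apply: (cg i).
exact: open_nbhs_nbhs.
Qed.

Definition clamp01 (r : R) : R := Num.max 0 (Num.min r 1).
Lemma clamp01_in (r : R) : clamp01 r \in unit_itv R.
Proof.
apply/mem_set; rewrite /unit_itv /clamp01 /= in_itv /=.
rewrite le_max lexx /= ge_max ler01 /= ge_min lexx orbT //.
Qed.
Definition to01 (r : R) : I01 R := exist _ (clamp01 r) (clamp01_in r).

Lemma clamp01_cont : continuous clamp01.
Proof.
move=> x.
have hm : {for x, continuous (fun r : R => Num.min r 1)}.
  apply: (@continuous_min R R id (fun=> 1) x); first exact: cvg_id.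
  exact: cst_continuous.
have hc : {for x, continuous (fun=> (0:R))} by exact: cst_continuous.
have := (@continuous_max R R (fun=> 0) (fun r => Num.min r 1) x hc hm).
by [].
Qed.

Lemma clamp01_id (r : R) : 0 <= r <= 1 -> clamp01 r = r.
Proof. by case/andP=> r0 r1; rewrite /clamp01 (min_l r1) (max_r r0). Qed.

Lemma to01_cont : continuous to01.
Proof. apply: cont_to01; exact: clamp01_cont. Qed.

Lemma compact_I01 : compact [set: I01 R].
Proof.
have -> : [set: I01 R] = to01 @` `[0, 1].
  apply/seteqP; split => // y _; exists (sval y).
    by have := I01_bounds y; rewrite /= in_itv.
  apply: val_inj => /=; rewrite clamp01_id //; exact: I01_bounds.
apply: continuous_compact; last exact: segment_compact.
apply: continuous_subspaceT => x; exact: to01_cont.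
Qed.

Lemma compact_cube (I : Type) : compact [set: cube R I].
Proof.
have := @tychonoff {classic I} (fun _ => I01 R) (fun _ => setT) (fun _ => compact_I01).
congr compact; by apply/seteqP; split.
Qed.
Lemma sep_core (X : Type) (A B : set (cube R X)) (x : cube R X) :
  closed B -> A x -> ~ B x ->
  exists h : cube R X -> I01 R, continuous h /\
    box_val (Vmap h A) < box_val (Vmap h B).
Proof.
move=> cB Ax nBx.
have sep := @point_uniform_separator R ({ptws X -> set_type (unit_itv R)}) x B cB nBx.
pose u := Urysohn (R := R) [set x] B.
have cu : continuous u by exact: Urysohn_continuous.
exists (fun z => to01 (u z)); split.
  by move=> z; apply: continuous_comp; [exact: cu| exact: to01_cont].
have u0 : u x = 0.
  by have := @Urysohn_sub0 _ R [set x] B sep (u x) (ex_intro2 _ _ x erefl erefl).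
have hA : box_val (Vmap (fun z => to01 (u z)) A) <= 0.
  have := @bv_le R (Vmap (fun z => to01 (u z)) A) (to01 (u x)) (ex_intro2 _ _ x Ax erefl).
  by rewrite /= u0 clamp01_id // lexx ler01.
have hB : 1 <= box_val (Vmap (fun z => to01 (u z)) B).
  apply: bv_ge => // _ [z Bz <-] /=.
  have -> : u z = 1 by have := @Urysohn_sub1 _ R [set x] B sep (u z) (ex_intro2 _ _ z Bz erefl).
  by rewrite clamp01_id // ler01 lexx.
lra.
Qed.

Lemma separate (X : Type) (p q : vietoris (cube R X)) : p <> q ->
  exists h : cube R X -> I01 R, continuous h /\
    box (Vmap h (sval p)) <> box (Vmap h (sval q)).
Proof.
move=> pq.
have spq : sval p <> sval q by move=> e; apply: pq; exact: val_inj.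
have cp : closed (sval p) by have := svalP p; rewrite inE.
have cq : closed (sval q) by have := svalP q; rewrite inE.
have [x hx] : exists x, ~ (sval p x <-> sval q x).
  apply: contrapT => hn; apply: spq; apply/seteqP; split => x.
    by move=> px; have := hn; move=> /forallNP/(_ x)/contrapT [] /(_ px).
  by move=> qx; have := hn; move=> /forallNP/(_ x)/contrapT [] _ /(_ qx).
have [px|npx] := pselect (sval p x).
  have nqx : ~ sval q x by move=> qx; apply: hx.
  have [h [ch lt]] := @sep_core X _ _ _ cq px nqx.
  exists h; split => // e; move: lt; rewrite -[box_val _]/(sval (box (Vmap h (sval p)))) e /=.
  by rewrite ltxx.
have qx : sval q x by apply: contrapT => nq; apply: hx; split.
have [h [ch lt]] := @sep_core X _ _ _ cp qx npx.
exists h; split => // e; move: lt; rewrite -[box_val (Vmap h (sval q))]/(sval (box (Vmap h (sval q)))) -e /=.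
by rewrite ltxx.
Qed.
End Cube.

Section Lat.
Variable R : realType.
Variable X : Type.
Local Notation V := (vietoris (cube R X)).

Definition Phi (hs : nat -> cube R X -> I01 R) (K : V) : cube R nat :=
  fun n => box (Vmap (hs n) (sval K)).

Definition inL (g : V -> R) := exists (hs : nat -> cube R X -> I01 R) (t : cube R nat -> R),
  [/\ forall n, continuous (hs n), continuous t & forall K, g K = t (Phi hs K)].

Lemma Phi_cont hs : (forall n, continuous (hs n)) -> continuous (Phi hs).
Proof. by move=> ch; apply: cont_prod => n; exact: box_cont. Qed.

Lemma L_cont g : inL g -> continuous g.
Proof.
move=> [hs [t [ch ct eg]]].
have -> : g = t \o Phi hs by apply: funext => K; exact: eg.
move=> K; apply: continuous_comp; [exact: Phi_cont | exact: ct].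
Qed.

Lemma L_const c : inL (fun _ => c).
Proof.
exists (fun _ _ => @to01 R 0), (fun _ => c); split => //.
- by move=> n x; exact: cst_continuous.
- by move=> x; exact: cst_continuous.
Qed.

Definition ev2 (z : cube R nat) : cube R nat := fun n => z n.*2.
Definition od2 (z : cube R nat) : cube R nat := fun n => z n.*2.+1.
Lemma ev2_cont : continuous ev2.
Proof. by apply: cont_prod => n; exact: cont_proj. Qed.
Lemma od2_cont : continuous od2.
Proof. by apply: cont_prod => n; exact: cont_proj. Qed.

Definition mixhs (hs1 hs2 : nat -> cube R X -> I01 R) n :=
  if odd n then hs2 n./2 else hs1 n./2.

Lemma mixhs_cont hs1 hs2 : (forall n, continuous (hs1 n)) -> (forall n, continuous (hs2 n)) ->
  forall n, continuous (mixhs hs1 hs2 n).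
Proof. by move=> c1 c2 n; rewrite /mixhs; case: (odd n). Qed.

Lemma ev2_mix hs1 hs2 K : ev2 (Phi (mixhs hs1 hs2) K) = Phi hs1 K.
Proof. by apply: funext => n; rewrite /ev2 /Phi /mixhs odd_double doubleK. Qed.

Lemma od2_mix hs1 hs2 K : od2 (Phi (mixhs hs1 hs2) K) = Phi hs2 K.
Proof.
apply: funext => n; rewrite /od2 /Phi /mixhs /= odd_double /=.
by rewrite uphalf_double.
Qed.

Lemma L_op (op : R -> R -> R) g1 g2 :
  (forall (T : topologicalType) (u v : T -> R), continuous u -> continuous v ->
     continuous (fun x => op (u x) (v x))) ->
  inL g1 -> inL g2 -> inL (fun K => op (g1 K) (g2 K)).
Proof.
move=> cop [hs1 [t1 [ch1 ct1 e1]]] [hs2 [t2 [ch2 ct2 e2]]].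
exists (mixhs hs1 hs2), (fun z => op (t1 (ev2 z)) (t2 (od2 z))); split.
- exact: mixhs_cont.
- apply: cop.
    by move=> z; apply: continuous_comp; [exact: ev2_cont|exact: ct1].
  by move=> z; apply: continuous_comp; [exact: od2_cont|exact: ct2].
- by move=> K; rewrite ev2_mix od2_mix e1 e2.
Qed.

Lemma L_min g1 g2 : inL g1 -> inL g2 -> inL (fun K => Num.min (g1 K) (g2 K)).
Proof.
apply: L_op => T u v cu cv x.
exact: (@continuous_min R T u v x (cu x) (cv x)).
Qed.

Lemma L_max g1 g2 : inL g1 -> inL g2 -> inL (fun K => Num.max (g1 K) (g2 K)).
Proof.
apply: L_op => T u v cu cv x.
exact: (@continuous_max R T u v x (cu x) (cv x)).
Qed.
End Lat.

HB.instance Definition _ (Z : topologicalType) :=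
  isPointed.Build (vietoris Z) (exist _ set0 (mem_set closed0)).

Lemma open_ltfun (T : topologicalType) (R : realType) (u v : T -> R) :
  continuous u -> continuous v -> open [set x | u x < v x].
Proof.
move=> cu cv.
have cw : continuous (fun x => v x - u x).
  by move=> x; apply: cvgB; [exact: cv|exact: cu].
have -> : [set x | u x < v x] = (fun x => v x - u x) @^-1` [set r | 0 < r].
  by apply/seteqP; split => x /=; rewrite subr_gt0.
by move/continuousP : cw => cw; exact: (cw _ (@open_gt _ 0)).
Qed.

Section KK.
Variable R : realType.
Variable X : Type.
Local Notation V := (vietoris (cube R X)).
Local Notation inL := (@inL R X).
Variable fv : V -> R.
Hypothesis cfv : continuous fv.
Hypothesis fv01 : forall K, 0 <= fv K <= 1.

Lemma cont_aff (T : topologicalType) (u : T -> R) (c k a : R) :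
  continuous u -> continuous (fun x => c + k * (u x - a)).
Proof.
move=> cu x.
have ha : {for x, continuous (fun _ : T => a)} by exact: cst_continuous.
have hk : {for x, continuous (fun _ : T => k)} by exact: cst_continuous.
have hc : {for x, continuous (fun _ : T => c)} by exact: cst_continuous.
have h1 : {for x, continuous (fun x => u x - a)}.
  by have := @continuousB R R^o T u (fun=> a) x (cu x) ha.
have h2 : {for x, continuous (fun x => k * (u x - a))}.
  by have := @continuousM R T (fun=> k) (fun x => u x - a) x hk h1.
by have := @continuousD R R^o T (fun=> c) (fun x => k * (u x - a)) x hc h2.
Qed.

Lemma L_interp (p q : V) : exists g, inL g /\ g p = fv p /\ g q = fv q.
Proof.
have [->|pq] := pselect (p = q).
  by exists (fun _ => fv q); split; [exact: L_const|].
have [h [ch hne]] := @separate R X p q pq.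
set a := sval (box (Vmap h (sval p))).
set b := sval (box (Vmap h (sval q))).
have ab : b - a != 0.
  rewrite subr_eq0; apply/eqP => e; apply: hne; exact: val_inj.
pose k := (fv q - fv p) / (b - a).
exists (fun K => fv p + k * (sval (box (Vmap h (sval K))) - a)); split; last first.
  split; first by rewrite subrr mulr0 addr0.
  rewrite /k -/b mulrAC -mulrA divff // mulr1; lra.
exists (fun _ => h), (fun z : cube R nat => fv p + k * (sval (z 0%N) - a)); split => //.
apply: cont_aff => z; apply: continuous_comp; [exact: cont_proj | exact: cont_sval].
Qed.

Lemma fold_min (s : seq V) (G : V -> V -> R) (a : V -> R) (m : R) (p : V) :
  (forall q, inL (G q)) -> (forall q, m <= G q p) ->
  exists g, [/\ inL g, m <= g p & forall r, (exists q, q \in s /\ G q r < a r) -> g r < a r].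
Proof.
move=> LG mG; elim: s => [|q s [g [Lg mg hg]]].
  exists (fun _ => m); split => //; first exact: L_const.
  by move=> r [q []]; rewrite in_nil.
exists (fun K => Num.min (G q K) (g K)); split.
- exact: L_min.
- by rewrite le_min mG mg.
- move=> r [q' [+ lt]]; rewrite in_cons => /orP[/eqP eqq|q's].
    by rewrite gt_min -eqq lt.
  by rewrite gt_min hg ?orbT //; exists q'.
Qed.

Lemma fold_max (s : seq V) (G : V -> V -> R) (b c : V -> R) :
  (forall q, inL (G q)) -> (forall q r, G q r < c r) -> (forall r, -1 < c r) ->
  exists g, [/\ inL g, forall r, g r < c r &
     forall r, (exists q, q \in s /\ b r < G q r) -> b r < g r].
Proof.
move=> LG Gc c1; elim: s => [|q s [g [Lg gc hg]]].
  exists (fun _ => -1); split => //; first exact: L_const.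
  by move=> r [q []]; rewrite in_nil.
exists (fun K => Num.max (G q K) (g K)); split.
- exact: L_max.
- by move=> r; rewrite gt_max Gc gc.
- move=> r [q' [+ lt]]; rewrite in_cons => /orP[/eqP eqq|q's].
    by rewrite lt_max -eqq lt.
  by rewrite lt_max hg ?orbT //; exists q'.
Qed.

Lemma cont_addc (T : topologicalType) (u : T -> R) (c : R) :
  continuous u -> continuous (fun x => u x + c).
Proof.
move=> cu x.
have hc : {for x, continuous (fun _ : T => c)} by exact: cst_continuous.
by have := @continuousD R R^o T u (fun=> c) x (cu x) hc.
Qed.

Lemma approx e : 0 < e -> exists g, inL g /\ forall K, `|fv K - g K| < e.
Proof.
move=> e0.
pose GG p := projT1 (choice (L_interp p)).
have hGG p q : inL (GG p q) /\ GG p q p = fv p /\ GG p q q = fv q.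
  exact: (projT2 (choice (L_interp p)) q).
have cV : compact [set: V] := @vcompact (cube R X) (compact_cube R X).
rewrite compact_cover in cV.
have step p : exists g, [/\ inL g, fv p <= g p & forall r, g r < fv r + e].
  have hop : forall q, setT q -> open [set r | GG p q r < fv r + e].
    move=> q _; apply: open_ltfun; [exact: (@L_cont R X _ (proj1 (hGG p q))) | exact: cont_addc].
  have hcov : [set: V] `<=` cover setT (fun q => [set r | GG p q r < fv r + e]).
    move=> r _; exists r => //=; have [_ [_ ->]] := hGG p r; by rewrite ltrDl.
  have [D' _ cov] := cV V setT _ hop hcov.
  have mG : forall q, fv p <= GG p q p by move=> q; have [_ [-> _]] := hGG p q.
  have [g [Lg gp hg]] := @fold_min (finmap.enum_fset D') (GG p) (fun r => fv r + e) (fv p) p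
     (fun q => proj1 (hGG p q)) mG.
  exists g; split => // r; apply: hg.
  by have [q Dq Uq] := cov r I; exists q; split.
pose GP := projT1 (choice step).
have hGP p : [/\ inL (GP p), fv p <= GP p p & forall r, GP p r < fv r + e].
  exact: (projT2 (choice step) p).
have hop : forall p, setT p -> open [set r | fv r + - e < GP p r].
  move=> p _; apply: open_ltfun; first exact: cont_addc.
  by case: (hGP p) => Lp _ _; exact: (@L_cont R X _ Lp).
have hcov : [set: V] `<=` cover setT (fun p => [set r | fv r + - e < GP p r]).
  move=> r _; exists r => //=; case: (hGP r) => _ h _; lra.
have [D' _ cov] := cV V setT _ hop hcov.
have c1 : forall r, -1 < fv r + e by move=> r; have := fv01 r; lra.
have [g [Lg gc hg]] := @fold_max (finmap.enum_fset D') GP (fun r => fv r + - e) (fun r => fv r + e)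
   (fun p => let: And3 h _ _ := hGP p in h) (fun p => let: And3 _ _ h := hGP p in h) c1.
exists g; split => // K.
have h1 := gc K.
have h2 : fv K + - e < g K.
  by apply: hg; have [q Dq Uq] := cov K I; exists q; split.
rewrite ltr_norml; apply/andP; split; lra.
Qed.

End KK.

Section Glue.
Variable R : realType.

Definition en (n : nat) : R := ((2 : R) ^+ n)^-1.

Lemma en_gt0 n : 0 < en n.
Proof. by rewrite /en invr_gt0 exprn_gt0. Qed.

Lemma en_S n : en n = 2 * en n.+1.
Proof.
rewrite /en exprS invfM mulrA mulfV ?mul1r //.
Qed.

Lemma en_small d : 0 < d -> exists n, en n < d.
Proof.
move=> d0; exists (Num.truncn d^-1).+1.
have h1 := truncnS_gt d^-1.
have h2 : ((Num.truncn d^-1).+1%:R : R) <= (2 : R) ^+ (Num.truncn d^-1).+1.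
  by rewrite -natrX ler_nat; apply: ltnW; apply: ltn_expl.
have p2 : (0 : R) < 2 ^+ (Num.truncn d^-1).+1 by rewrite exprn_gt0.
rewrite /en -div1r ltr_pdivrMr //.
have : d^-1 < 2 ^+ (Num.truncn d^-1).+1 by exact: lt_le_trans h1 h2.
rewrite -(ltr_pM2l d0) mulfV ?gt_eqF //.
Qed.

Definition clip (x lo hi : R) := Num.max lo (Num.min x hi).

Lemma clip_id x lo hi : lo <= x -> x <= hi -> clip x lo hi = x.
Proof. by move=> h1 h2; rewrite /clip (min_l h2) (max_r h1). Qed.

Lemma clip_bnd x lo hi : lo <= hi -> lo <= clip x lo hi <= hi.
Proof.
move=> lh; rewrite /clip le_max lexx /= ge_max lh /= ge_min lexx orbT //.
Qed.

Lemma clip_cont (T : topologicalType) (u lo hi : T -> R) :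
  continuous u -> continuous lo -> continuous hi ->
  continuous (fun x => clip (u x) (lo x) (hi x)).
Proof.
move=> cu cl ch x.
have hm : {for x, continuous (fun x => Num.min (u x) (hi x))}.
  exact: (@continuous_min R T u hi x (cu x) (ch x)).
by have := (@continuous_max R T lo (fun x => Num.min (u x) (hi x)) x (cl x) hm).
Qed.
End Glue.

Section Glue2.
Variable R : realType.
Variable X : Type.
Local Notation V := (vietoris (cube R X)).
Local Notation en := (@en R).
Local Notation Phi := (@Phi R X).
Local Notation clip := (@clip R).
Variable fv : V -> R.
Variable HS : nat -> nat -> cube R X -> I01 R.
Variable T : nat -> cube R nat -> R.
Hypothesis cT : forall n, continuous (T n).
Hypothesis appr : forall n K, `|fv K - T n (Phi (HS n) K)| < en n.

Definition hY (y : nat * nat) := HS y.1 y.2.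
Definition PhiY (K : V) : cube R (nat * nat) := fun y => box (Vmap (hY y) (sval K)).
Definition pin n (z : cube R (nat * nat)) : cube R nat := fun k => z (n, k).
Definition uu n z := T n (pin n z).

Fixpoint sq n z := match n with
  | 0 => uu 0 z
  | n'.+1 => clip (uu n'.+1 z) (sq n' z - 3 * en n'.+1) (sq n' z + 3 * en n'.+1)
  end.

Lemma pin_cont n : continuous (pin n).
Proof. by apply: cont_prod => k; exact: cont_proj. Qed.

Lemma uu_cont n : continuous (uu n).
Proof. by move=> z; apply: continuous_comp; [exact: pin_cont|exact: cT]. Qed.

Lemma sq_cont n : continuous (sq n).
Proof.
elim: n => [|n IH] /=; first exact: uu_cont.
apply: clip_cont; [exact: uu_cont| |].
- exact: cont_addc.
- exact: cont_addc.
Qed.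

Lemma sq_step n z : `|sq n.+1 z - sq n z| <= 3 * en n.+1.
Proof.
have e0 := en_gt0 R n.+1.
have := @clip_bnd R (uu n.+1 z) (sq n z - 3 * en n.+1) (sq n z + 3 * en n.+1) ltac:(lra).
rewrite /= => /andP[h1 h2].
rewrite ler_norml; apply/andP; split; lra.
Qed.

Lemma sq_img n K : `|sq n (PhiY K) - fv K| < en n.
Proof.
elim: n => [|n IH] /=.
  by rewrite distrC; exact: (appr 0 K).
have hu := appr n.+1 K.
have -> : uu n.+1 (PhiY K) = T n.+1 (Phi (HS n.+1) K) by [].
have es := en_S R n.
rewrite clip_id.
- by rewrite distrC.
- move: IH hu; rewrite !ltr_norml => /andP[a1 a2] /andP[b1 b2]; lra.
- move: IH hu; rewrite !ltr_norml => /andP[a1 a2] /andP[b1 b2]; lra.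
Qed.

Definition aa n z := sq n z + 3 * en n.
Definition bb n z := sq n z - 3 * en n.

Lemma aa_dec n z : aa n.+1 z <= aa n z.
Proof.
have := sq_step n z; have := en_S R n; rewrite /aa ler_norml => es /andP[h1 h2]; lra.
Qed.

Lemma bb_inc n z : bb n z <= bb n.+1 z.
Proof.
have := sq_step n z; have := en_S R n; rewrite /bb ler_norml => es /andP[h1 h2]; lra.
Qed.

Lemma aa_mono n k z : aa (n + k) z <= aa n z.
Proof.
elim: k => [|k IH]; first by rewrite addn0.
by rewrite addnS; apply: le_trans IH; exact: aa_dec.
Qed.

Lemma bb_mono n k z : bb n z <= bb (n + k) z.
Proof.
elim: k => [|k IH]; first by rewrite addn0.
by rewrite addnS; apply: le_trans IH _; exact: bb_inc.
Qed.

Lemma bb_le_aa n m z : bb n z <= aa m z.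
Proof.
apply: le_trans (bb_mono n m z) _.
apply: le_trans _ (aa_mono m n z).
rewrite addnC /aa /bb; have := en_gt0 R (m + n); lra.
Qed.

Definition SS z := inf (range (fun n => aa n z)).

Lemma SS_le n z : SS z <= aa n z.
Proof.
apply: ge_inf; last by exists n.
by exists (bb 0 z) => _ [m _ <-]; exact: bb_le_aa.
Qed.

Lemma SS_ge n z : bb n z <= SS z.
Proof.
apply: lb_le_inf; first by exists (aa 0 z), 0%N.
by move=> _ [m _ <-]; exact: bb_le_aa.
Qed.

Lemma SS_near n z : `|SS z - sq n z| <= 3 * en n.
Proof.
have := SS_le n z; have := SS_ge n z; rewrite /aa /bb ler_norml => h1 h2.
apply/andP; split; lra.
Qed.

Lemma SS_cont : continuous SS.
Proof.
move=> z.
have NF : Filter (nbhs z) by exact: nbhs_filter.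
move: NF; rewrite /nbhs /= => NF.
apply/cvgrPdist_lt => e e0.
have e12 : 0 < e / 12 by rewrite divr_gt0.
have [n hn] := @en_small R _ e12.
have e2 : 0 < e / 2 by rewrite divr_gt0.
have := (sq_cont n z); move/cvgrPdist_lt => /(_ _ e2) nr.
apply: (filterS _ nr) => w hw.
have h1 := SS_near n z; have h2 := SS_near n w.
move: h1 h2 hw; rewrite !ler_norml ltr_norml => /andP[a1 a2] /andP[b1 b2] /andP[c1 c2].
rewrite ltr_norml; apply/andP; split; lra.
Qed.

Lemma SS_img K : SS (PhiY K) = fv K.
Proof.
have H n : `|SS (PhiY K) - fv K| < 4 * en n.
  have := SS_near n (PhiY K); have := sq_img n K.
  rewrite ler_norml !ltr_norml => /andP[a1 a2] /andP[b1 b2].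
  apply/andP; split; lra.
apply/eqP; rewrite -subr_eq0 -normr_eq0 eq_le normr_ge0 andbT.
rewrite leNgt; apply/negP => d0.
have d4 : 0 < `|SS (PhiY K) - fv K| / 4 by rewrite divr_gt0.
have [n hn] := @en_small R _ d4.
have := H n; lra.
Qed.
End Glue2.

Close Scope ring_scope.

Theorem theorem5p10 (R : realType) (X : Type)
    (f : vietoris (cube R X) -> I01 R) :
  continuous f ->
  exists (Y : Type) (s : cube R Y -> I01 R) (h : Y -> cube R X -> I01 R),
    [/\ countable [set: Y], continuous s,
        (forall y, continuous (h y)) &
        f = s \o (fun K : vietoris (cube R X) =>
                    (fun y => box (Vmap (h y) (sval K))) : cube R Y)].
Proof.
move=> cf.
pose fv := fun K => sval (f K).
have cfv : continuous fv.
  by move=> K; apply: continuous_comp; [exact: cf| exact: cont_sval].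
have fv01 K : (0 <= fv K <= 1)%R by exact: I01_bounds.
have H n : exists pr : (nat -> cube R X -> I01 R) * (cube R nat -> R),
   [/\ forall k, continuous (pr.1 k), continuous pr.2 &
       forall K, (`|fv K - pr.2 (Phi R X pr.1 K)| < en R n)%R].
  have [g [[hs [t [ch ct eg]]] hg]] := @approx R X fv cfv fv01 _ (en_gt0 R n).
  by exists (hs, t); split => // K /=; rewrite -eg; exact: hg.
pose P := projT1 (choice H).
have hP n : [/\ forall k, continuous ((P n).1 k), continuous (P n).2 &
       forall K, (`|fv K - (P n).2 (Phi R X (P n).1 K)| < en R n)%R].
  exact: (projT2 (choice H) n).
pose HS n := (P n).1.
pose T n := (P n).2.
have cT n : continuous (T n) by case: (hP n).
have appr n K : (`|fv K - T n (Phi R X (HS n) K)| < en R n)%R by case: (hP n) => _ _; apply.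
exists (nat * nat)%type, (fun z => @to01 R (SS R T z)), (hY R X HS); split.
- exact: countableP.
- move=> z; apply: continuous_comp; [exact: SS_cont|exact: to01_cont].
- by move=> [n k]; rewrite /hY /=; case: (hP n) => + _ _; apply.
- apply: funext => K /=; apply: val_inj => /=.
  have -> : SS R T (fun y => box (Vmap (hY R X HS y) (sval K))) = fv K.
    exact: (@SS_img R X fv HS T appr K).
  by rewrite clamp01_id //; exact: fv01.
Qed.
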